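(* Let $(\lambda,\omega)$ be a stable Hamiltonian structure on a closed 3-manifold $M$, with integrable region $U=U_1\sqcup\dots\sqcup U_k$ as in the structure theorem. Then there exist arbitrarily $C^\infty$-small perturbations of $(\lambda,\omega)$, compactly supported in the interior of $U$ and $T^2$-invariant on each $U_i$, yielding a stable Hamiltonian structure $(\tilde\lambda,\tilde\omega)$ such that the slope of $\ker\tilde\omega$ (equivalently of its Reeb vector field) is non-constant on each connected component $U_i$.
   Context: A stable Hamiltonian structure (SHS) on an oriented 3-manifold $M$ is a pair $(\lambda,\omega)$ with $\lambda\wedge\omega>0$, $d\omega=0$, $\ker\omega\subset\ker d\lambda$; its Reeb vector field $X$ satisfies $\lambda(X)=1$, $\iota_X\omega=0$. Structure theorem (Cieliebak–Volkov): there exist a compact $X$-invariant 3-submanifold $N$, a disjoint union $U=U_1\sqcup\dots\sqcup U_k$ of compact regions $U_i\cong T^2\times[0,1]$ with $N\cap U=\partial N\cap\partial U$, $N\cup U=M$, such that (among other properties) on each $U_i$ the SHS is $T^2$-invariant: in coordinates $(x,y,t)$ one has $\lambda=g_1(t)dx+g_2(t)dy+g_3(t)dt$ and $\omega=h_1(t)dt\wedge dx+h_2(t)dt\wedge dy$. The slope of $\ker\omega$ on $T^2\times\{t\}$ is the slope of the linear vector field $h_1(t)\partial_x+h_2(t)\partial_y$ spanning $\ker\omega$ there. *)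

(* Defs.v *)
From Stdlib Require Import Reals.
From Coquelicot Require Import Coquelicot.
Open Scope R_scope.

(* A T^2-invariant pair (lambda, omega) on T^2 x [0,1] with coordinates (x,y,t):
     lambda = g1(t) dx + g2(t) dy + g3(t) dt
     omega  = h1(t) dt/\dx + h2(t) dt/\dy + h3(t) dx/\dy
   (the most general T^2-invariant 1-form and 2-form).  The coefficient
   functions are given on all of R (every smooth function on [0,1] extends). *)
Record T2form := mkT2 {
  g1 : R -> R; g2 : R -> R; g3 : R -> R;
  h1 : R -> R; h2 : R -> R; h3 : R -> R }.

Definition vec := (R * R * R)%type.
Definition cx (v : vec) : R := fst (fst v).
Definition cy (v : vec) : R := snd (fst v).
Definition ct (v : vec) : R := snd v.

Definition wedge11 (a b : vec -> R) (v w : vec) : R := a v * b w - a w * b v.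

Definition smooth (f : R -> R) : Prop := forall n x, ex_derive_n f n x.

Definition T2_smooth (F : T2form) : Prop :=
  smooth (g1 F) /\ smooth (g2 F) /\ smooth (g3 F) /\
  smooth (h1 F) /\ smooth (h2 F) /\ smooth (h3 F).

Definition lam (F : T2form) (t : R) (v : vec) : R :=
  g1 F t * cx v + g2 F t * cy v + g3 F t * ct v.

Definition om (F : T2form) (t : R) (v w : vec) : R :=
  h1 F t * wedge11 ct cx v w + h2 F t * wedge11 ct cy v w
  + h3 F t * wedge11 cx cy v w.

Definition dlam (F : T2form) (t : R) (v w : vec) : R :=
  Derive (g1 F) t * wedge11 ct cx v w + Derive (g2 F) t * wedge11 ct cy v w.

(* d omega = h3'(t) dt/\dx/\dy ; its coefficient: *)
Definition dom_coef (F : T2form) (t : R) : R := Derive (h3 F) t.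

Definition ex : vec := (1, 0, 0). Definition ey : vec := (0, 1, 0).
Definition et : vec := (0, 0, 1).

Definition lam_wedge_om (F : T2form) (t : R) (u v w : vec) : R :=
  lam F t u * om F t v w - lam F t v * om F t u w + lam F t w * om F t u v.

Definition SHS_on_U (F : T2form) : Prop :=
  T2_smooth F /\
  forall t, 0 <= t <= 1 ->
    lam_wedge_om F t ex ey et > 0 /\
    dom_coef F t = 0 /\
    (forall v : vec, (forall w, om F t v w = 0) -> forall w, dlam F t v w = 0).

Definition Ck_close (k : nat) (eps : R) (f f' : R -> R) : Prop :=
  forall j t, (j <= k)%nat -> 0 <= t <= 1 ->
    Rabs (Derive_n (fun s => f' s - f s) j t) < eps.

Definition T2_Ck_close (k : nat) (eps : R) (F F' : T2form) : Prop :=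
  Ck_close k eps (g1 F) (g1 F') /\ Ck_close k eps (g2 F) (g2 F') /\
  Ck_close k eps (g3 F) (g3 F') /\ Ck_close k eps (h1 F) (h1 F') /\
  Ck_close k eps (h2 F) (h2 F') /\ Ck_close k eps (h3 F) (h3 F').

Definition supp_in_interior (F F' : T2form) : Prop :=
  exists a b, 0 < a /\ a < b /\ b < 1 /\
    forall t, (t < a \/ b < t) ->
      g1 F' t = g1 F t /\ g2 F' t = g2 F t /\ g3 F' t = g3 F t /\
      h1 F' t = h1 F t /\ h2 F' t = h2 F t /\ h3 F' t = h3 F t.

(* The slope of ker omega on T^2 x {t} is that of h1(t) d/dx + h2(t) d/dy,
   a point of RP^1 = [h1(t) : h2(t)].  Non-constant slope on [0,1]: *)
Definition slope_nonconstant (F : T2form) : Prop :=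
  exists t s, 0 <= t <= 1 /\ 0 <= s <= 1 /\
    h1 F t * h2 F s - h2 F t * h1 F s <> 0.

(* Main.v *)
Require Import Defs.
From Stdlib Require Import Reals Lra Lia Classical List IndefiniteDescription.
From Coquelicot Require Import Coquelicot.
Open Scope R_scope.

Lemma shift f f' : (forall x, is_derive f x (f' x)) ->
  forall j x, ex_derive_n f (S j) x <-> ex_derive_n f' j x.
Proof.
  intros H j x. destruct j as [|j].
  - simpl. split; auto. intros _. exists (f' x). apply H.
  - assert (E : forall y, Derive_n f (S j) y = Derive_n f' j y).
    { intros y. replace (S j) with (j + 1)%nat by lia.
      rewrite <- Derive_n_comp. apply Derive_n_ext. intros t. simpl.
      apply is_derive_unique. apply H. }
    simpl. split; apply ex_derive_ext; intros; [|symmetry]; apply E.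
Qed.

Definition Dn (n : nat) (f : R -> R) := forall k x, (k <= n)%nat -> ex_derive_n f k x.

Lemma smooth_Dn f : smooth f <-> forall n, Dn n f.
Proof. split; intros H. intros n k x _; apply H. intros n x; apply (H n n x); lia. Qed.

Lemma Dn_deriv n f : Dn (S n) f -> (forall x, is_derive f x (Derive f x)) /\ Dn n (Derive f).
Proof.
  intros H. assert (D : forall x, is_derive f x (Derive f x)).
  { intros x. apply Derive_correct. apply (H 1%nat x). lia. }
  split; auto. intros k x Hk. apply (shift f (Derive f) D). apply H. lia.
Qed.

Lemma Dn_of_deriv n f f' : (forall x, is_derive f x (f' x)) -> Dn n f' -> Dn (S n) f.
Proof.
  intros D H k x Hk. destruct k. exact I. apply (shift f f' D). apply H. lia.
Qed.

Lemma Dn_plus n f g : Dn n f -> Dn n g -> Dn n (fun x => f x + g x).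
Proof.
  intros Hf Hg k x Hk. apply ex_derive_n_plus; exists (mkposreal 1 Rlt_0_1);
  intros y _ k' Hk'; [apply Hf|apply Hg]; lia.
Qed.

Lemma Dn_ext n f g : (forall t, f t = g t) -> Dn n f -> Dn n g.
Proof. intros E H k x Hk. eapply ex_derive_n_ext. exact E. apply H; auto. Qed.

Lemma Dn_const n c : Dn n (fun _ => c).
Proof. intros k x _. apply ex_derive_n_const. Qed.

Lemma Dn_le n m f : (m <= n)%nat -> Dn n f -> Dn m f.
Proof. intros Hm H k x Hk. apply H. lia. Qed.

Lemma Dn_mult n : forall f g, Dn n f -> Dn n g -> Dn n (fun x => f x * g x).
Proof.
  induction n as [|n IH]; intros f g Hf Hg.
  - intros k x Hk. assert (k = 0%nat) by lia. subst. exact I.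
  - destruct (Dn_deriv n f Hf) as [Df Hf']. destruct (Dn_deriv n g Hg) as [Dg Hg'].
    apply Dn_of_deriv with (f' := fun x => Derive f x * g x + f x * Derive g x).
    + intros x. apply (is_derive_mult f g x _ _ (Df x) (Dg x)).
      intros; apply Rmult_comm.
    + apply Dn_plus; apply IH; auto; apply (Dn_le (S n)); auto.
Qed.

Lemma smooth_mult f g : smooth f -> smooth g -> smooth (fun x => f x * g x).
Proof. rewrite !smooth_Dn. intros; apply Dn_mult; auto. Qed.
Lemma smooth_plus f g : smooth f -> smooth g -> smooth (fun x => f x + g x).
Proof. rewrite !smooth_Dn. intros; apply Dn_plus; auto. Qed.
Lemma smooth_const c : smooth (fun _ => c).
Proof. rewrite smooth_Dn. intros; apply Dn_const. Qed.
Lemma smooth_ext f g : (forall t, f t = g t) -> smooth f -> smooth g.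
Proof. rewrite !smooth_Dn. intros E H n; eapply Dn_ext; eauto. Qed.
Lemma smooth_scal c f : smooth f -> smooth (fun x => c * f x).
Proof. intros; apply smooth_mult; auto using smooth_const. Qed.
Lemma smooth_opp f : smooth f -> smooth (fun x => - f x).
Proof. intros H. apply smooth_ext with (fun x => -1 * f x). intros; ring. apply smooth_scal; auto. Qed.
Lemma smooth_minus f g : smooth f -> smooth g -> smooth (fun x => f x - g x).
Proof. intros. apply smooth_plus; auto. apply smooth_opp; auto. Qed.
Lemma smooth_Derive f : smooth f -> smooth (Derive f).
Proof. rewrite !smooth_Dn. intros H n. apply (Dn_deriv n f (H (S n))). Qed.
Lemma smooth_ex_derive f x : smooth f -> ex_derive f x.
Proof. intros H. apply (H 1%nat x). Qed.

Lemma Dn_inv n : forall f, smooth f -> (forall x, f x <> 0) -> Dn n (fun x => / f x).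
Proof.
  induction n as [|n IH]; intros f Hf Hnz.
  - intros k x Hk. assert (k = 0%nat) by lia. subst. exact I.
  - apply Dn_of_deriv with (f' := fun x => (- Derive f x) * (/ f x * / f x)).
    + intros x. eapply is_derive_ext with (f := fun y => / f y). reflexivity.
      replace (- Derive f x * (/ f x * / f x)) with (- Derive f x / f x ^ 2).
      apply is_derive_inv; auto. apply Derive_correct, smooth_ex_derive; auto.
      field. auto.
    + apply Dn_mult. rewrite smooth_Dn in Hf. 
      apply (smooth_Dn (fun x => - Derive f x)). apply smooth_opp, smooth_Derive.
      rewrite smooth_Dn; auto.
      apply Dn_mult; apply IH; auto.
Qed.

Lemma smooth_inv f : smooth f -> (forall x, f x <> 0) -> smooth (fun x => / f x).
Proof. intros. rewrite smooth_Dn. intros; apply Dn_inv; auto. Qed.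

Lemma smooth_trans f b : smooth f -> smooth (fun y => f (y + b)).
Proof. intros H n x. apply ex_derive_n_comp_trans. apply H. Qed.

Lemma smooth_opp_arg f : smooth f -> smooth (fun y => f (- y)).
Proof. intros H n x. apply ex_derive_n_comp_opp. exists (mkposreal 1 Rlt_0_1). intros; apply H. Qed.


Lemma D_eq (f : R -> R) (x l l' : R) : is_derive f x l -> l = l' -> is_derive f x l'.
Proof. intros H ->; auto. Qed.
Lemma D_plus (f g : R -> R) (x df dg : R) : is_derive f x df -> is_derive g x dg -> is_derive (fun t => f t + g t) x (df + dg).
Proof. intros; apply (is_derive_plus f g); auto. Qed.
Lemma D_mult (f g : R -> R) (x df dg : R) : is_derive f x df -> is_derive g x dg -> is_derive (fun t => f t * g t) x (df * g x + f x * dg).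
Proof. intros; apply (is_derive_mult f g); auto. intros; apply Rmult_comm. Qed.
Lemma D_const (c x : R) : is_derive (fun _ => c) x 0.
Proof. apply (is_derive_const c x). Qed.
Lemma D_id (x : R) : is_derive (fun t => t) x 1.
Proof. apply (is_derive_id x). Qed.
Lemma D_comp (f g : R -> R) (x df dg : R) : is_derive f (g x) df -> is_derive g x dg -> is_derive (fun t => f (g t)) x (dg * df).
Proof. intros; apply (is_derive_comp f g); auto. Qed.

Fixpoint peval (l : list R) (y : R) : R :=
  match l with nil => 0 | c :: l' => c + y * peval l' y end.
Fixpoint padd (l m : list R) : list R :=
  match l, m with nil, _ => m | _, nil => l | a :: l', b :: m' => (a + b) :: padd l' m' end.
Lemma peval_padd l : forall m y, peval (padd l m) y = peval l y + peval m y.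
Proof. induction l as [|a l IH]; intros [|b m] y; simpl; try ring. rewrite IH. ring. Qed.
Definition pscal c l := map (fun a => c * a) l.
Lemma peval_pscal c l y : peval (pscal c l) y = c * peval l y.
Proof. induction l; simpl; auto. ring. rewrite IHl. ring. Qed.
Fixpoint pder (l : list R) : list R :=
  match l with nil => nil | c :: l' => padd l' (0 :: pder l') end.
Lemma is_derive_peval l y : is_derive (peval l) y (peval (pder l) y).
Proof.
  induction l as [|c l IH]; simpl.
  - apply D_const.
  - rewrite peval_padd. simpl. eapply D_eq.
    apply D_plus. apply D_const. apply D_mult. apply D_id. apply IH. simpl. ring.
Qed.

Definition TP (l : list R) := 0 :: 0 :: padd l (pscal (-1) (pder l)).
Lemma peval_TP l y : peval (TP l) y = y * y * (peval l y - peval (pder l) y).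
Proof. unfold TP. simpl. rewrite peval_padd, peval_pscal. ring. Qed.

Definition fP (l : list R) (x : R) : R :=
  if Rle_dec x 0 then 0 else peval l (/ x) * exp (- / x).

Fixpoint pB (l : list R) : R := match l with nil => 0 | c :: l' => Rabs c + pB l' end.
Lemma pB_ge0 l : 0 <= pB l.
Proof. induction l; simpl; [lra|]. pose proof (Rabs_pos a); lra. Qed.
Lemma peval_bound l : forall y, 1 <= y -> Rabs (peval l y) <= pB l * y ^ length l.
Proof.
  induction l as [|c l IH]; intros y Hy; simpl.
  - rewrite Rabs_R0; lra.
  - pose proof (IH y Hy). pose proof (pB_ge0 l).
    assert (1 <= y ^ length l) by (apply pow_R1_Rle; lra).
    eapply Rle_trans. apply Rabs_triang. rewrite Rabs_mult, (Rabs_right y) by lra.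
    assert (y * Rabs (peval l y) <= y * (pB l * y ^ length l)) by (apply Rmult_le_compat_l; lra).
    pose proof (Rabs_pos c).
    assert (Rabs c <= Rabs c * (y * y ^ length l)).
    { rewrite <- (Rmult_1_r (Rabs c)) at 1. apply Rmult_le_compat_l; auto. nra. }
    nra.
Qed.

Lemma exp_mult_nat (n : nat) z : exp (INR n * z) = exp z ^ n.
Proof.
  induction n. simpl. rewrite Rmult_0_l, exp_0; auto.
  rewrite S_INR, Rmult_plus_distr_r, exp_plus, IHn, Rmult_1_l. simpl. ring.
Qed.

Lemma pow_le_exp (M : nat) y : (1 <= M)%nat -> 0 <= y -> y ^ M <= INR M ^ M * exp y.
Proof.
  intros HM Hy. assert (HMp : 0 < INR M) by (apply lt_0_INR; lia).
  destruct (Req_dec y 0) as [->|Hy0].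
  - rewrite pow_i by lia. pose proof (exp_pos 0). pose proof (pow_lt _ M HMp). nra.
  - assert (H1 : y / INR M < exp (y / INR M)).
    { pose proof (exp_ineq1 (y / INR M)). assert (y / INR M <> 0).
      { unfold Rdiv. apply Rmult_integral_contrapositive; split; auto. apply Rinv_neq_0_compat; lra. }
      specialize (H H0). lra. }
    assert (E : exp y = exp (y / INR M) ^ M).
    { rewrite <- exp_mult_nat. f_equal. field. lra. }
    rewrite E. replace (y ^ M) with (INR M ^ M * (y / INR M) ^ M).
    apply Rmult_le_compat_l. apply pow_le; lra. apply pow_incr. split.
    apply Rmult_le_pos; auto. left; apply Rinv_0_lt_compat; auto. lra.
    rewrite <- Rpow_mult_distr. f_equal. field. lra.
Qed.

Lemma locally_gt x a : a < x -> locally x (fun t => a < t).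
Proof.
  intros H. assert (Hp : 0 < x - a) by lra. exists (mkposreal _ Hp).
  intros y Hy. change (Rabs (y - x) < x - a) in Hy. apply Rabs_def2 in Hy. lra.
Qed.
Lemma locally_lt x a : x < a -> locally x (fun t => t < a).
Proof.
  intros H. assert (Hp : 0 < a - x) by lra. exists (mkposreal _ Hp).
  intros y Hy. change (Rabs (y - x) < a - x) in Hy. apply Rabs_def2 in Hy. lra.
Qed.

Lemma fP_bound l : exists K, forall h, 0 < h <= 1 -> Rabs (peval l (/ h) * exp (- / h)) <= K * (h * h).
Proof.
  set (N := length l). set (M := (N + 2)%nat).
  exists (pB l * INR M ^ M). intros h Hh.
  set (Y := / h). assert (HY : 1 <= Y). { unfold Y. rewrite <- Rinv_1. apply Rinv_le_contravar; lra. }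
  assert (hY : h = / Y) by (unfold Y; rewrite Rinv_inv; auto).
  pose proof (peval_bound l Y HY) as Hb. fold N in Hb.
  pose proof (pow_le_exp M Y ltac:(unfold M; lia) ltac:(lra)) as He.
  assert (EM : Y ^ M = Y ^ N * (Y * Y)) by (unfold M; rewrite pow_add; simpl; ring).
  rewrite Rabs_mult, (Rabs_right (exp _)) by (left; apply exp_pos).
  rewrite exp_Ropp. fold Y. rewrite hY.
  pose proof (exp_pos Y). pose proof (pB_ge0 l).
  assert (HYN : 0 < Y ^ N) by (apply pow_lt; lra).
  apply Rmult_le_reg_r with (exp Y * (Y * Y)). apply Rmult_lt_0_compat; nra.
  replace (Rabs (peval l Y) * / exp Y * (exp Y * (Y * Y))) with (Rabs (peval l Y) * (Y * Y)) by (field; lra).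
  replace (pB l * INR M ^ M * (/ Y * / Y) * (exp Y * (Y * Y))) with (pB l * (INR M ^ M * exp Y)) by (field; lra).
  apply Rle_trans with (pB l * Y ^ N * (Y * Y)). apply Rmult_le_compat_r; nra.
  rewrite Rmult_assoc, <- EM. apply Rmult_le_compat_l; auto.
Qed.

Lemma fP_derive l x : is_derive (fP l) x (fP (TP l) x).
Proof.
  destruct (Rtotal_order x 0) as [Hx|[Hx|Hx]].
  - unfold fP at 2. destruct (Rle_dec x 0); [|lra].
    apply is_derive_ext_loc with (fun _ => 0).
    eapply filter_imp. 2: apply (locally_lt x 0 Hx). intros t Ht. simpl.
    unfold fP. destruct (Rle_dec t 0); [auto|lra].
    apply D_const.
  - subst. unfold fP at 2. destruct (Rle_dec 0 0); [|lra].
    apply is_derive_Reals. destruct (fP_bound l) as [K HK].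
    intros eps Heps. assert (Hd : 0 < Rmin 1 (eps / (Rabs K + 1))).
    { apply Rmin_pos. lra. apply Rdiv_lt_0_compat; auto. pose proof (Rabs_pos K); lra. }
    exists (mkposreal _ Hd). intros h Hh0 Hh. simpl in Hh.
    pose proof (Rmin_l 1 (eps / (Rabs K + 1))). pose proof (Rmin_r 1 (eps / (Rabs K + 1))).
    unfold fP. rewrite Rplus_0_l. destruct (Rle_dec 0 0); [|lra].
    destruct (Rle_dec h 0).
    + replace ((0 - 0) / h - 0) with 0 by (field; auto). rewrite Rabs_R0; auto.
    + assert (Hh' : 0 < h <= 1) by (apply Rabs_def2 in Hh; lra).
      specialize (HK h Hh').
      replace ((peval l (/ h) * exp (- / h) - 0) / h - 0) with ((peval l (/ h) * exp (- / h)) * / h) by (field; lra).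
      rewrite Rabs_mult, (Rabs_right (/ h)) by (left; apply Rinv_0_lt_compat; lra).
      apply Rle_lt_trans with (K * (h * h) * / h). apply Rmult_le_compat_r; auto. left; apply Rinv_0_lt_compat; lra.
      replace (K * (h * h) * / h) with (K * h) by (field; lra).
      assert (h < eps / (Rabs K + 1)) by (apply Rabs_def2 in Hh; lra).
      assert (h * (Rabs K + 1) < eps).
      { apply Rmult_lt_reg_r with (/ (Rabs K + 1)). apply Rinv_0_lt_compat. pose proof (Rabs_pos K); lra.
        replace (h * (Rabs K + 1) * / (Rabs K + 1)) with h by (field; pose proof (Rabs_pos K); lra). exact H1. }
      pose proof (Rle_abs K). nra.
  - unfold fP at 2. destruct (Rle_dec x 0); [lra|].
    apply is_derive_ext_loc with (fun y => peval l (/ y) * exp (- / y)).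
    eapply filter_imp. 2: apply (locally_gt x 0 Hx). intros t Ht. simpl.
    unfold fP. destruct (Rle_dec t 0); [lra|auto].
    eapply D_eq. apply D_mult.
    apply (D_comp (peval l) (fun y => / y)). apply is_derive_peval.
    apply (is_derive_inv (fun y => y) x 1). apply D_id. lra.
    apply (D_comp exp (fun y => - / y)). apply is_derive_exp.
    apply (is_derive_opp (fun y => / y)). apply (is_derive_inv (fun y => y) x 1). apply D_id. lra.
    rewrite peval_TP. simpl. unfold opp, one; simpl. field. lra.
Qed.

Lemma smooth_fP l : smooth (fP l).
Proof.
  intros n. revert l. induction n; intros l x. exact I.
  apply (shift (fP l) (fP (TP l)) (fP_derive l)). apply IHn.
Qed.

Definition psi := fP (1 :: nil).
Definition dpsi := fP (TP (1 :: nil)).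
Lemma psi_le0 x : x <= 0 -> psi x = 0.
Proof. unfold psi, fP. destruct (Rle_dec x 0); auto; lra. Qed.
Lemma dpsi_le0 x : x <= 0 -> dpsi x = 0.
Proof. unfold dpsi, fP. destruct (Rle_dec x 0); auto; lra. Qed.
Lemma psi_pos x : 0 < x -> psi x = exp (- / x).
Proof. unfold psi, fP. destruct (Rle_dec x 0). lra. simpl. rewrite Rmult_0_r, Rplus_0_r, Rmult_1_l. reflexivity. Qed.
Lemma dpsi_pos x : 0 < x -> dpsi x = / x * / x * exp (- / x).
Proof. unfold dpsi, fP. destruct (Rle_dec x 0). lra. rewrite peval_TP. simpl. intros; ring. Qed.
Lemma psi_ge0 x : 0 <= psi x.
Proof. destruct (Rle_dec x 0). rewrite psi_le0; lra. rewrite psi_pos by lra. left; apply exp_pos. Qed.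
Lemma psi_derive x : is_derive psi x (dpsi x).
Proof. apply fP_derive. Qed.
Lemma smooth_psi : smooth psi.
Proof. apply smooth_fP. Qed.

Definition zeta (a b : R) (t : R) := psi (t - a) * psi (b - t).
Definition dzeta (a b : R) (t : R) := dpsi (t - a) * psi (b - t) - psi (t - a) * dpsi (b - t).
Lemma zeta_derive a b t : is_derive (zeta a b) t (dzeta a b t).
Proof.
  unfold zeta, dzeta. eapply D_eq. apply (D_mult (fun t => psi (t - a)) (fun t => psi (b - t))).
  apply (D_comp psi (fun t => t - a)). apply psi_derive.
  eapply D_eq. apply (D_plus (fun t => t) (fun _ => - a)). apply D_id. apply D_const. reflexivity.
  apply (D_comp psi (fun t => b - t)). apply psi_derive.
  eapply D_eq. apply (D_plus (fun _ => b) (fun t => - t)). apply D_const.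
  apply (is_derive_opp (fun t : R => t)). apply D_id. reflexivity.
  change (1 + 0) with (1 + 0). change (0 + opp one) with (0 + opp (1:R)).
  unfold opp, one; simpl. ring.
Qed.
Lemma smooth_zeta a b : smooth (zeta a b).
Proof.
  unfold zeta. apply (smooth_mult (fun t => psi (t - a)) (fun t => psi (b - t))).
  apply (smooth_ext (fun y => psi (y + - a))). intros t. unfold Rminus. reflexivity.
  apply (smooth_trans psi), smooth_psi.
  apply (smooth_ext (fun y => (fun z => psi (z + b)) (- y))). intros t. cbv beta. rewrite Rplus_comm. reflexivity.
  apply (smooth_opp_arg (fun z => psi (z + b))), smooth_trans, smooth_psi.
Qed.

Lemma Derive_zeta a b t : Derive (zeta a b) t = dzeta a b t.
Proof. apply is_derive_unique, zeta_derive. Qed.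
Lemma zeta_out a b t : (t <= a \/ b <= t) -> zeta a b t = 0 /\ dzeta a b t = 0.
Proof.
  intros [H|H]; unfold zeta, dzeta; rewrite ?(psi_le0 (t - a)), ?(dpsi_le0 (t - a)),
    ?(psi_le0 (b - t)), ?(dpsi_le0 (b - t)) by lra; split; ring.
Qed.
Lemma smooth_dzeta a b : smooth (dzeta a b).
Proof. apply smooth_ext with (Derive (zeta a b)). apply Derive_zeta. apply smooth_Derive, smooth_zeta. Qed.
Global Opaque psi dpsi fP.


Lemma cont_of_ex f x : ex_derive f x -> continuity_pt f x.
Proof. intros H. apply derivable_continuous_pt, ex_derive_Reals_0, H. Qed.

Lemma cont_bound f : (forall x, ex_derive f x) -> exists M, 0 <= M /\ forall t, 0 <= t <= 1 -> Rabs (f t) <= M.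
Proof.
  intros H. destruct (continuity_ab_maj (comp Rabs f) 0 1) as [Mx [HM _]]. lra.
  intros c _. apply continuity_pt_comp. apply cont_of_ex, H. apply Rcontinuity_abs.
  exists (Rabs (f Mx)). split. apply Rabs_pos. intros t Ht. apply (HM t Ht).
Qed.

Lemma cont_min f : (forall x, ex_derive f x) -> (forall t, 0 <= t <= 1 -> 0 < f t) ->
  exists m, 0 < m /\ forall t, 0 <= t <= 1 -> m <= f t.
Proof.
  intros H Hp. destruct (continuity_ab_min f 0 1) as [mx [Hm Hmx]]. lra.
  intros c _. apply cont_of_ex, H. exists (f mx). split; auto.
Qed.

Lemma deriv_bound P : smooth P -> forall k, exists M, 0 <= M /\
  forall j t, (j <= k)%nat -> 0 <= t <= 1 -> Rabs (Derive_n P j t) <= M.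
Proof.
  intros HP k. induction k as [|k [M [HM0 HM]]].
  - destruct (cont_bound (Derive_n P 0)) as [M [HM0 HM]]. intros x. apply (HP 1%nat x).
    exists M. split; auto. intros j t Hj Ht. assert (j = 0%nat) by lia. subst. apply HM; auto.
  - destruct (cont_bound (Derive_n P (S k))) as [M' [HM0' HM']]. intros x. apply (HP (S (S k)) x).
    exists (Rmax M M'). split. apply Rle_trans with M; auto; apply Rmax_l.
    intros j t Hj Ht. destruct (Nat.eq_dec j (S k)). subst. eapply Rle_trans. apply HM'; auto. apply Rmax_r.
    eapply Rle_trans. apply HM; auto; lia. apply Rmax_l.
Qed.

Lemma close_pert P : smooth P -> forall k eps, eps > 0 -> exists d, 0 < d /\
  forall e, 0 <= e <= d -> forall f, Ck_close k eps f (fun s => f s + e * P s).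
Proof.
  intros HP k eps He. destruct (deriv_bound P HP k) as [M [HM0 HM]].
  exists (eps / (2 * (M + 1))). split. apply Rdiv_lt_0_compat; lra.
  intros e Hed f j t Hj Ht.
  rewrite (Derive_n_ext _ (fun s => e * P s)) by (intros; ring).
  rewrite Derive_n_scal_l, Rabs_mult, (Rabs_right e) by lra.
  specialize (HM j t Hj Ht).
  apply Rle_lt_trans with (eps / (2 * (M + 1)) * M).
  apply Rmult_le_compat; try lra. apply Rabs_pos.
  apply Rmult_lt_reg_r with (2 * (M + 1)). lra.
  replace (eps / (2 * (M + 1)) * M * (2 * (M + 1))) with (eps * M) by (field; lra). nra.
Qed.

Lemma close_same k eps f : eps > 0 -> Ck_close k eps f f.
Proof.
  intros He j t _ _. rewrite (Derive_n_ext _ (fun _ => 0)) by (intros; ring).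
  destruct j. simpl. rewrite Rabs_R0; lra. rewrite Derive_n_const, Rabs_R0; lra.
Qed.

Lemma lwo_formula F t : lam_wedge_om F t ex ey et =
  g2 F t * h1 F t - g1 F t * h2 F t + g3 F t * h3 F t.
Proof. unfold lam_wedge_om, lam, om, wedge11, ex, ey, et, cx, cy, ct. simpl. ring. Qed.

Lemma kern F t : h3 F t = 0 -> lam_wedge_om F t ex ey et > 0 ->
  Derive (g2 F) t * h1 F t - Derive (g1 F) t * h2 F t = 0 ->
  forall v : vec, (forall w, om F t v w = 0) -> forall w, dlam F t v w = 0.
Proof.
  intros H3 Hp Hpar v Hv w. rewrite lwo_formula, H3 in Hp.
  assert (Hh : h1 F t <> 0 \/ h2 F t <> 0).
  { destruct (Req_dec (h1 F t) 0); auto. destruct (Req_dec (h2 F t) 0); auto.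
    rewrite H, H0 in Hp. lra. }
  pose proof (Hv ex) as E1. pose proof (Hv ey) as E2. pose proof (Hv et) as E3.
  destruct v as [[vx vy] vt]. destruct w as [[wx wy] wt].
  unfold om, wedge11, ex, ey, et, cx, cy, ct in E1, E2, E3. simpl in E1, E2, E3.
  rewrite H3 in E1, E2, E3.
  unfold dlam, wedge11, cx, cy, ct. simpl.
  set (a := h1 F t) in *. set (b := h2 F t) in *.
  set (u1 := Derive (g1 F) t) in *. set (u2 := Derive (g2 F) t) in *.
  assert (Hvt : vt = 0).
  { destruct Hh as [Ha|Hb]. apply (Rmult_eq_reg_l a); auto. nra.
    apply (Rmult_eq_reg_l b); auto. nra. }
  subst vt.
  assert (HE3 : a * vx + b * vy = 0) by lra.
  assert (Hs : u1 * vx + u2 * vy = 0).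
  { destruct Hh as [Ha|Hb].
    apply (Rmult_eq_reg_l a); auto. rewrite Rmult_0_r.
    replace (a * (u1 * vx + u2 * vy)) with (u1 * (a * vx + b * vy) + vy * (u2 * a - u1 * b)) by ring.
    rewrite HE3, Hpar. ring.
    apply (Rmult_eq_reg_l b); auto. rewrite Rmult_0_r.
    replace (b * (u1 * vx + u2 * vy)) with (u2 * (a * vx + b * vy) - vx * (u2 * a - u1 * b)) by ring.
    rewrite HE3, Hpar. ring. }
  replace (u1 * (0 * wx - wt * vx) + u2 * (0 * wy - wt * vy)) with (- wt * (u1 * vx + u2 * vy)) by ring.
  rewrite Hs. ring.
Qed.

Definition pert (F : T2form) (e : R) (p1 p2 q1 q2 : R -> R) : T2form :=
  mkT2 (fun s => g1 F s + e * p1 s) (fun s => g2 F s + e * p2 s) (g3 F)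
       (fun s => h1 F s + e * q1 s) (fun s => h2 F s + e * q2 s) (h3 F).

Lemma Derive_pert f p e t : ex_derive f t -> ex_derive p t ->
  Derive (fun s => f s + e * p s) t = Derive f t + e * Derive p t.
Proof.
  intros Hf Hp. rewrite Derive_plus; auto. rewrite Derive_scal. auto.
  apply ex_derive_scal; auto.
Qed.

Lemma generic F p1 p2 q1 q2 :
  SHS_on_U F -> (forall t, h3 F t = 0) ->
  smooth p1 -> smooth p2 -> smooth q1 -> smooth q2 ->
  (forall e t, 0 <= t <= 1 ->
     (Derive (g2 F) t + e * Derive p2 t) * (h1 F t + e * q1 t)
     - (Derive (g1 F) t + e * Derive p1 t) * (h2 F t + e * q2 t) = 0) ->
  forall k eps, eps > 0 -> exists e, 0 < e /\
    SHS_on_U (pert F e p1 p2 q1 q2) /\ T2_Ck_close k eps F (pert F e p1 p2 q1 q2).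
Proof.
  intros [[S1 [S2 [S3 [S4 [S5 S6]]]]] HS] H3 Sp1 Sp2 Sq1 Sq2 Hpar k eps Heps.
  destruct (close_pert p1 Sp1 k eps Heps) as [d1 [Hd1 C1]].
  destruct (close_pert p2 Sp2 k eps Heps) as [d2 [Hd2 C2]].
  destruct (close_pert q1 Sq1 k eps Heps) as [d3 [Hd3 C3]].
  destruct (close_pert q2 Sq2 k eps Heps) as [d4 [Hd4 C4]].
  set (C0 := fun t => g2 F t * h1 F t - g1 F t * h2 F t).
  set (E1 := fun t => p2 t * h1 F t + g2 F t * q1 t - p1 t * h2 F t - g1 F t * q2 t).
  set (E2 := fun t => p2 t * q1 t - p1 t * q2 t).
  assert (SC0 : smooth C0) by (apply smooth_minus; apply smooth_mult; auto).
  assert (SE1 : smooth E1).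
  { unfold E1. apply smooth_minus. apply smooth_minus. apply smooth_plus.
    apply smooth_mult; auto. apply smooth_mult; auto. apply smooth_mult; auto. apply smooth_mult; auto. }
  assert (SE2 : smooth E2) by (apply smooth_minus; apply smooth_mult; auto).
  destruct (cont_min C0) as [m [Hm HmC]]. intros; apply smooth_ex_derive; auto.
  { intros t Ht. destruct (HS t Ht) as [P _]. rewrite lwo_formula, H3 in P. unfold C0. lra. }
  destruct (cont_bound E1) as [L1 [HL1 HE1]]. intros; apply smooth_ex_derive; auto.
  destruct (cont_bound E2) as [L2 [HL2 HE2]]. intros; apply smooth_ex_derive; auto.
  set (e := Rmin (Rmin (Rmin d1 d2) (Rmin d3 d4)) (Rmin 1 (m / (2 * (L1 + L2 + 1))))).
  assert (He0 : 0 < e).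
  { unfold e. repeat apply Rmin_pos; auto. lra. apply Rdiv_lt_0_compat; lra. }
  assert (He1 : e <= d1 /\ e <= d2 /\ e <= d3 /\ e <= d4 /\ e <= 1 /\ e <= m / (2 * (L1 + L2 + 1))).
  { assert (A1 : e <= Rmin (Rmin d1 d2) (Rmin d3 d4)) by apply Rmin_l.
    assert (A2 : e <= Rmin 1 (m / (2 * (L1 + L2 + 1)))) by apply Rmin_r.
    pose proof (Rmin_l d1 d2). pose proof (Rmin_r d1 d2). pose proof (Rmin_l d3 d4). pose proof (Rmin_r d3 d4).
    pose proof (Rmin_l (Rmin d1 d2) (Rmin d3 d4)). pose proof (Rmin_r (Rmin d1 d2) (Rmin d3 d4)).
    pose proof (Rmin_l 1 (m / (2 * (L1 + L2 + 1)))). pose proof (Rmin_r 1 (m / (2 * (L1 + L2 + 1)))).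
    repeat split; lra. }
  destruct He1 as [e1 [e2 [e3 [e4 [e5 e6]]]]].
  exists e. split; auto. split.
  - split.
    + unfold T2_smooth, pert; simpl. repeat split; auto; apply smooth_plus; auto; apply smooth_scal; auto.
    + intros t Ht. destruct (HS t Ht) as [_ [Hd _]].
      assert (Hpos : lam_wedge_om (pert F e p1 p2 q1 q2) t ex ey et > 0).
      { rewrite lwo_formula. unfold pert; simpl. rewrite H3.
        specialize (HmC t Ht). specialize (HE1 t Ht). specialize (HE2 t Ht).
        unfold C0 in HmC. unfold E1 in HE1. unfold E2 in HE2.
        apply Rabs_le_between in HE1. apply Rabs_le_between in HE2.
        assert (Hx : e * (L1 + L2 + 1) <= m / 2).
        { apply Rmult_le_reg_r with (/ (L1 + L2 + 1)). apply Rinv_0_lt_compat; lra.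
          replace (e * (L1 + L2 + 1) * / (L1 + L2 + 1)) with e by (field; lra).
          replace (m / 2 * / (L1 + L2 + 1)) with (m / (2 * (L1 + L2 + 1))) by (field; lra). auto. }
        set (X1 := p2 t * h1 F t + g2 F t * q1 t - p1 t * h2 F t - g1 F t * q2 t) in *.
        set (X2 := p2 t * q1 t - p1 t * q2 t) in *.
        replace ((g2 F t + e * p2 t) * (h1 F t + e * q1 t) - (g1 F t + e * p1 t) * (h2 F t + e * q2 t) + g3 F t * 0)
          with ((g2 F t * h1 F t - g1 F t * h2 F t) + e * X1 + (e * e) * X2) by (unfold X1, X2; ring).
        assert (B1 : e * (- L1) <= e * X1) by (apply Rmult_le_compat_l; lra).
        assert (Hee : 0 <= e * e <= e) by (split; nra).
        assert (B2 : (e * e) * (- L2) <= (e * e) * X2) by (apply Rmult_le_compat_l; lra).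
        assert (B3 : e * e * L2 <= e * L2) by (apply Rmult_le_compat_r; lra).
        lra. }
      split; auto. split.
      * unfold dom_coef, pert; simpl. exact Hd.
      * apply kern; [apply H3 | exact Hpos | ]. unfold pert; simpl.
        rewrite !Derive_pert by (apply smooth_ex_derive; auto). apply Hpar; auto.
  - unfold T2_Ck_close, pert; simpl. repeat split.
    apply C1; lra. apply C2; lra. apply close_same; auto. apply C3; lra. apply C4; lra. apply close_same; auto.
Qed.


Lemma cont_pos_near f x0 : continuity_pt f x0 -> f x0 > 0 ->
  exists alp, alp > 0 /\ forall x, Rabs (x - x0) < alp -> f x > 0.
Proof.
  intros Hc Hp. unfold continuity_pt, continue_in, limit1_in, limit_in in Hc.
  destruct (Hc (f x0 / 2)) as [alp [Ha H]]. lra.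
  exists alp. split; auto. intros x Hx.
  destruct (Req_dec x x0). subst; auto.
  specialize (H x). simpl in H. unfold R_dist in H.
  assert (Rabs (f x - f x0) < f x0 / 2). apply H. split. split. exact I. auto. auto.
  apply Rabs_def2 in H1. lra.
Qed.

Lemma kern_conv F t : SHS_on_U F -> (forall t, h3 F t = 0) -> 0 <= t <= 1 ->
  Derive (g2 F) t * h1 F t - Derive (g1 F) t * h2 F t = 0.
Proof.
  intros [_ HS] H3 Ht. destruct (HS t Ht) as [_ [_ K]].
  specialize (K (h2 F t, - h1 F t, 0)).
  assert (Hv : forall w, om F t (h2 F t, - h1 F t, 0) w = 0).
  { intros [[wx wy] wt]. unfold om, wedge11, cx, cy, ct. simpl. rewrite H3. ring. }
  specialize (K Hv et). unfold dlam, wedge11, cx, cy, ct, et in K. simpl in K. lra.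
Qed.

Lemma pos0 F t : SHS_on_U F -> (forall t, h3 F t = 0) -> 0 <= t <= 1 ->
  g2 F t * h1 F t - g1 F t * h2 F t > 0.
Proof. intros [_ HS] H3 Ht. destruct (HS t Ht) as [P _]. rewrite lwo_formula, H3 in P. lra. Qed.

Lemma hnz F t : SHS_on_U F -> (forall t, h3 F t = 0) -> 0 <= t <= 1 ->
  h1 F t * h1 F t + h2 F t * h2 F t > 0.
Proof.
  intros HS H3 Ht. pose proof (pos0 F t HS H3 Ht).
  destruct (Req_dec (h1 F t) 0); destruct (Req_dec (h2 F t) 0).
  rewrite H0, H1 in H; lra. all: nra.
Qed.

Lemma smooth_g1' F : SHS_on_U F -> smooth (Derive (g1 F)).
Proof. intros [[S1 _] _]. apply smooth_Derive; auto. Qed.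
Lemma smooth_g2' F : SHS_on_U F -> smooth (Derive (g2 F)).
Proof. intros [[_ [S2 _]] _]. apply smooth_Derive; auto. Qed.

Lemma Derive0 t : Derive (fun _ : R => 0) t = 0.
Proof. apply Derive_const. Qed.

Lemma Derive_zs c a b t : Derive (fun s => c * zeta a b s) t = c * dzeta a b t.
Proof. rewrite Derive_scal, Derive_zeta. auto. Qed.

Definition goalF F k eps F' := SHS_on_U F' /\ supp_in_interior F F' /\
  T2_Ck_close k eps F F' /\ slope_nonconstant F'.

Lemma case_id F k eps : SHS_on_U F -> eps > 0 -> slope_nonconstant F -> goalF F k eps F.
Proof.
  intros HS He Hsl. split; auto. split.
  exists (1/4), (3/4). repeat split; try lra.
  split. unfold T2_Ck_close. repeat split; apply close_same; auto. auto.
Qed.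

Lemma caseA F k eps : SHS_on_U F -> (forall t, h3 F t = 0) -> eps > 0 ->
  (forall t s, 0 <= t <= 1 -> 0 <= s <= 1 -> h1 F t * h2 F s - h2 F t * h1 F s = 0) ->
  (forall t, 0 < t < 1 -> Derive (g1 F) t = 0 /\ Derive (g2 F) t = 0) ->
  exists F', goalF F k eps F'.
Proof.
  intros HS H3 He Hc Hg.
  set (A := h1 F 0). set (B := h2 F 0).
  set (a := 1/4). set (b := 3/4).
  destruct (generic F (fun _ => 0) (fun _ => 0) (fun s => (- B) * zeta a b s) (fun s => A * zeta a b s)
     HS H3 (smooth_const 0) (smooth_const 0)
     (smooth_scal _ _ (smooth_zeta a b)) (smooth_scal _ _ (smooth_zeta a b))) with (k := k) (eps := eps)
     as [e [He0 [HS' HC']]]; auto.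
  { intros e t Ht. rewrite !Derive0. pose proof (kern_conv F t HS H3 Ht) as K.
    destruct (Rlt_dec 0 t) as [H0|H0]; [destruct (Rlt_dec t 1) as [H1|H1]|].
    - destruct (Hg t (conj H0 H1)) as [E1 E2]. rewrite E1, E2. ring.
    - destruct (zeta_out a b t) as [Z _]. right; unfold b; lra. rewrite Z. lra.
    - destruct (zeta_out a b t) as [Z _]. left; unfold a; lra. rewrite Z. lra. }
  exists (pert F e (fun _ => 0) (fun _ => 0) (fun s => (- B) * zeta a b s) (fun s => A * zeta a b s)).
  split; auto. split; [|split; auto].
  - exists a, b. unfold a, b. split; [lra|split;[lra|split;[lra|]]].
    intros t Ht. destruct (zeta_out (1/4) (3/4) t) as [Z _]. lra.
    unfold pert; simpl. rewrite Z. repeat split; ring.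
  - exists (1/2), 0. split. lra. split. lra. unfold pert; simpl.
    destruct (zeta_out a b 0) as [Z0 _]. left; unfold a; lra. rewrite Z0.
    pose proof (Hc (1/2) 0 ltac:(lra) ltac:(lra)) as Hc0. fold A B in Hc0.
    assert (Hz : zeta a b (1/2) > 0).
    { unfold zeta, a, b. rewrite !psi_pos by lra. pose proof (exp_pos (- / (1/2 - 1/4))). pose proof (exp_pos (- / (3/4 - 1/2))). nra. }
    pose proof (hnz F 0 HS H3 ltac:(lra)) as Hn. fold A B in Hn.
    replace ((h1 F (1 / 2) + e * (- B * zeta a b (1 / 2))) * (h2 F 0 + e * (A * 0)) -
       (h2 F (1 / 2) + e * (A * zeta a b (1 / 2))) * (h1 F 0 + e * (- B * 0)))
      with ((h1 F (1/2) * B - h2 F (1/2) * A) - e * zeta a b (1/2) * (A * A + B * B)) by (unfold A, B; ring).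
    rewrite Hc0. intro Habs.
    assert (e * zeta a b (1/2) * (A * A + B * B) > 0).
    { apply Rmult_gt_0_compat; auto. apply Rmult_gt_0_compat; auto. }
    lra.
Qed.

Lemma caseB F k eps : SHS_on_U F -> (forall t, h3 F t = 0) -> eps > 0 ->
  (forall t s, 0 <= t <= 1 -> 0 <= s <= 1 -> h1 F t * h2 F s - h2 F t * h1 F s = 0) ->
  forall t1, 0 < t1 < 1 -> (Derive (g1 F) t1 <> 0 \/ Derive (g2 F) t1 <> 0) ->
  exists F', goalF F k eps F'.
Proof.
  intros HS H3 He Hc t1 Ht1 Hg.
  set (A := h1 F 0). set (B := h2 F 0).
  set (Sg := fun t => Derive (g1 F) t * Derive (g1 F) t + Derive (g2 F) t * Derive (g2 F) t).
  assert (SS : smooth Sg) by (apply smooth_plus; apply smooth_mult; auto using smooth_g1', smooth_g2').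
  destruct (cont_pos_near Sg t1) as [alp [Ha Hal]].
  { apply cont_of_ex, smooth_ex_derive, SS. }
  { unfold Sg. destruct Hg as [Hg|Hg]; pose proof (Rle_0_sqr (Derive (g1 F) t1));
    pose proof (Rle_0_sqr (Derive (g2 F) t1)); unfold Rsqr in *; nra. }
  set (r := Rmin (alp / 2) (Rmin (t1 / 2) ((1 - t1) / 2))).
  assert (Hr : 0 < r /\ r <= alp / 2 /\ r <= t1 / 2 /\ r <= (1 - t1) / 2).
  { pose proof (Rmin_l (alp / 2) (Rmin (t1 / 2) ((1 - t1) / 2))).
    pose proof (Rmin_r (alp / 2) (Rmin (t1 / 2) ((1 - t1) / 2))).
    pose proof (Rmin_l (t1 / 2) ((1 - t1) / 2)). pose proof (Rmin_r (t1 / 2) ((1 - t1) / 2)).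
    split. unfold r. repeat apply Rmin_pos; lra. fold r in H, H0. lra. }
  destruct Hr as [Hr0 [Hr1 [Hr2 Hr3]]].
  set (a := t1 - r). set (b := t1 + r).
  assert (HSab : forall t, a <= t <= b -> Sg t > 0).
  { intros t Ht. apply Hal. apply Rabs_def1; unfold a, b in Ht; lra. }
  set (D := fun t => Sg t + psi (a - t) + psi (t - b)).
  assert (HDpos : forall t, D t > 0).
  { intros t. unfold D. pose proof (psi_ge0 (a - t)). pose proof (psi_ge0 (t - b)).
    destruct (Rlt_dec t a). rewrite (psi_pos (a - t)) by lra. pose proof (exp_pos (- / (a - t))).
    unfold Sg. nra.
    destruct (Rlt_dec b t). rewrite (psi_pos (t - b)) by lra. pose proof (exp_pos (- / (t - b))).
    unfold Sg. nra.
    pose proof (HSab t ltac:(lra)). lra. }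
  assert (SD : smooth D).
  { unfold D. apply smooth_plus. apply smooth_plus. auto.
    apply (smooth_ext (fun y => (fun z => psi (z + a)) (- y))). intros t. cbv beta. rewrite Rplus_comm. reflexivity.
    apply (smooth_opp_arg (fun z => psi (z + a))), smooth_trans, smooth_psi.
    apply (smooth_ext (fun y => psi (y + - b))). intros t. unfold Rminus. reflexivity.
    apply (smooth_trans psi), smooth_psi. }
  set (eta := fun t => dzeta a b t * (h1 F t * Derive (g1 F) t + h2 F t * Derive (g2 F) t) * / D t).
  assert (Seta : smooth eta).
  { destruct HS as [[S1 [S2 [S3 [S4 [S5 S6]]]]] _].
    unfold eta. apply smooth_mult. apply smooth_mult. apply smooth_dzeta.
    apply smooth_plus; apply smooth_mult; auto using smooth_Derive.
    apply smooth_inv; auto. intros x; specialize (HDpos x); lra. }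
  assert (eta_out : forall t, (t <= a \/ b <= t) -> eta t = 0).
  { intros t Ht. destruct (zeta_out a b t Ht) as [_ Z]. unfold eta. rewrite Z. ring. }
  destruct (generic F (fun s => (- B) * zeta a b s) (fun s => A * zeta a b s)
     (fun s => (- B) * eta s) (fun s => A * eta s)
     HS H3 (smooth_scal _ _ (smooth_zeta a b)) (smooth_scal _ _ (smooth_zeta a b))
     (smooth_scal _ _ Seta) (smooth_scal _ _ Seta)) with (k := k) (eps := eps)
     as [e [He0 [HS' HC']]]; auto.
  { intros e t Ht. rewrite !Derive_zs. pose proof (kern_conv F t HS H3 Ht) as K.
    destruct (Rle_dec t a) as [H0|H0]; [|destruct (Rle_dec b t) as [H1|H1]].
    - destruct (zeta_out a b t) as [_ Z]. auto. rewrite Z, (eta_out t) by auto. lra.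
    - destruct (zeta_out a b t) as [_ Z]. auto. rewrite Z, (eta_out t) by auto. lra.
    - assert (HDt : D t = Sg t).
      { unfold D. rewrite (psi_le0 (a - t)), (psi_le0 (t - b)) by lra. ring. }
      assert (HSt : Sg t > 0) by (apply HSab; lra).
      unfold eta. rewrite HDt. unfold Sg in *.
      set (u1 := Derive (g1 F) t) in *. set (u2 := Derive (g2 F) t) in *.
      set (z := dzeta a b t). set (x1 := h1 F t) in *. set (x2 := h2 F t) in *.
      replace ((u2 + e * (A * z)) * (x1 + e * (- B * (z * (x1 * u1 + x2 * u2) * / (u1 * u1 + u2 * u2)))) -
        (u1 + e * (- B * z)) * (x2 + e * (A * (z * (x1 * u1 + x2 * u2) * / (u1 * u1 + u2 * u2)))))
      with ((u2 * x1 - u1 * x2) * (1 + e * z * (A * u2 - B * u1) / (u1 * u1 + u2 * u2))) by (field; lra).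
      rewrite K. ring. }
  exists (pert F e (fun s => (- B) * zeta a b s) (fun s => A * zeta a b s)
     (fun s => (- B) * eta s) (fun s => A * eta s)).
  split; auto. split; [|split; auto].
  - exists a, b. split; [unfold a; lra|split;[unfold a, b; lra|split;[unfold b; lra|]]].
    intros t Ht. assert (Ht' : t <= a \/ b <= t) by (destruct Ht; [left|right]; lra).
    destruct (zeta_out a b t Ht') as [Z _].
    unfold pert; simpl. rewrite Z, (eta_out t Ht'). repeat split; ring.
  - set (t2 := t1 - r / 2). exists t2, 0. split. unfold t2; lra. split. lra. unfold pert; simpl.
    rewrite (eta_out 0) by (left; unfold a; lra).
    pose proof (Hc t2 0 ltac:(unfold t2; lra) ltac:(lra)) as Hc0. fold A B in Hc0.
    pose proof (hnz F 0 HS H3 ltac:(lra)) as Hn. fold A B in Hn.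
    replace ((h1 F t2 + e * (- B * eta t2)) * (h2 F 0 + e * (A * 0)) -
       (h2 F t2 + e * (A * eta t2)) * (h1 F 0 + e * (- B * 0)))
      with ((h1 F t2 * B - h2 F t2 * A) - e * eta t2 * (A * A + B * B)) by (unfold A, B; ring).
    rewrite Hc0.
    assert (Heta : eta t2 <> 0).
    { unfold eta. assert (Ht2 : a < t2 < b) by (unfold a, b, t2; lra).
      pose proof (HDpos t2) as HD.
      assert (Hz : dzeta a b t2 <> 0).
      { unfold dzeta. rewrite !psi_pos, !dpsi_pos by lra.
        replace (t2 - a) with (r / 2) by (unfold t2, a; lra).
        replace (b - t2) with (3 * r / 2) by (unfold t2, b; lra).
        set (E1 := exp (- / (r / 2))). set (E2 := exp (- / (3 * r / 2))).
        assert (0 < E1) by apply exp_pos. assert (0 < E2) by apply exp_pos.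
        replace (/ (r / 2) * / (r / 2) * E1 * E2 - E1 * (/ (3 * r / 2) * / (3 * r / 2) * E2))
          with (E1 * E2 * (32 / (9 * r * r))) by (field; lra).
        assert (0 < 32 / (9 * r * r)) by (apply Rdiv_lt_0_compat; nra).
        assert (0 < E1 * E2 * (32 / (9 * r * r))) by (apply Rmult_lt_0_compat; [apply Rmult_lt_0_compat|]; auto). lra. }
      assert (Hd : h1 F t2 * Derive (g1 F) t2 + h2 F t2 * Derive (g2 F) t2 <> 0).
      { pose proof (kern_conv F t2 HS H3 ltac:(unfold t2; lra)) as K.
        pose proof (hnz F t2 HS H3 ltac:(unfold t2; lra)) as Hh.
        pose proof (HSab t2 ltac:(lra)) as Hs. unfold Sg in Hs.
        set (u1 := Derive (g1 F) t2) in *. set (u2 := Derive (g2 F) t2) in *.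
        set (x1 := h1 F t2) in *. set (x2 := h2 F t2) in *.
        intro Hz0.
        assert (Id : (x1 * x1 + x2 * x2) * (u1 * u1 + u2 * u2) =
          (x1 * u1 + x2 * u2) * (x1 * u1 + x2 * u2) + (u2 * x1 - u1 * x2) * (u2 * x1 - u1 * x2)) by ring.
        rewrite Hz0, K in Id. assert (0 < (x1 * x1 + x2 * x2) * (u1 * u1 + u2 * u2)) by (apply Rmult_lt_0_compat; lra).
        lra. }
      apply Rmult_integral_contrapositive. split. apply Rmult_integral_contrapositive. split; auto.
      apply Rinv_neq_0_compat. lra. }
    intro Habs.
    assert (e * eta t2 * (A * A + B * B) <> 0).
    { apply Rmult_integral_contrapositive. split. apply Rmult_integral_contrapositive. split; lra. lra. }
    lra.
Qed.

Lemma one F k eps : SHS_on_U F -> (forall t, h3 F t = 0) -> eps > 0 -> exists F', goalF F k eps F'.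
Proof.
  intros HS H3 He.
  destruct (classic (slope_nonconstant F)) as [Hs|Hs].
  - exists F. apply case_id; auto.
  - assert (Hc : forall t s, 0 <= t <= 1 -> 0 <= s <= 1 -> h1 F t * h2 F s - h2 F t * h1 F s = 0).
    { intros t s Ht Hs'. destruct (Req_dec (h1 F t * h2 F s - h2 F t * h1 F s) 0); auto.
      exfalso. apply Hs. exists t, s. auto. }
    destruct (classic (exists t1, 0 < t1 < 1 /\ (Derive (g1 F) t1 <> 0 \/ Derive (g2 F) t1 <> 0))) as [[t1 [Ht1 Hg]]|Hn].
    + eapply caseB; eauto.
    + apply caseA; auto. intros t Ht.
      destruct (Req_dec (Derive (g1 F) t) 0); destruct (Req_dec (Derive (g2 F) t) 0); auto;
      exfalso; apply Hn; exists t; auto.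
Qed.


Theorem lemma6p2 (n : nat) (U : nat -> T2form) :
  (forall i, (i < n)%nat -> SHS_on_U (U i) /\ forall t, h3 (U i) t = 0) ->
  forall (k : nat) (eps : R), eps > 0 ->
  exists U' : nat -> T2form,
    forall i, (i < n)%nat ->
      SHS_on_U (U' i) /\
      supp_in_interior (U i) (U' i) /\
      T2_Ck_close k eps (U i) (U' i) /\
      slope_nonconstant (U' i).
Proof.
  intros HU k eps He.
  assert (Ex : forall i, exists F', (i < n)%nat -> goalF (U i) k eps F').
  { intros i. destruct (Nat.lt_ge_cases i n) as [Hi|Hi].
    - destruct (HU i Hi) as [HS H3]. destruct (one (U i) k eps HS H3 He) as [F' HF]. exists F'; auto.
    - exists (U i). intros; lia. }
  exists (fun i => proj1_sig (constructive_indefinite_description _ (Ex i))).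
  intros i Hi. exact (proj2_sig (constructive_indefinite_description _ (Ex i)) Hi).
Qed.
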